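(* Let $H_n=\sum_{j=1}^n\frac1j$, let $\gamma$ be the Euler–Mascheroni constant, $\Gamma$ the gamma function, and for real $z$ and positive integer $k$ let $z^{\overline{k}} = z(z+1) \cdots (z + k -1)$ be the rising factorial (Pochhammer symbol). For $k \in \{1, 2, 3, \ldots \}$ and $x > 0$, $$\sum_{n=1}^\infty (-1)^n \left(H_n -\log\sqrt[k]{(n+ x - 1)^{\overline{k}}} - \gamma \right) = \frac{\gamma}{2} + \frac{1}{k}\log\left[\frac{\Gamma\left(\frac{x+k}{2}\right)}{ \Gamma\left(\frac{x}{2} \right)}\right].$$ *)

(* Defs.v *)
From Stdlib Require Import Reals.
From Coquelicot Require Import Coquelicot.
Open Scope R_scope.

Fixpoint harmonic (n : nat) : R :=
  match n with
  | O => 0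
  | S m => harmonic m + / INR (S m)
  end.

Definition euler_gamma : R :=
  real (Lim_seq (fun n => harmonic n - ln (INR n))).

Definition Gamma (s : R) : R :=
  RInt_gen (fun t => Rpower t (s - 1) * exp (- t))
           (at_right 0) (Rbar_locally p_infty).

Fixpoint rising (z : R) (k : nat) : R :=
  match k with
  | O => 1
  | S m => rising z m * (z + INR m)
  end.

(* Main.v *)
Require Import Defs.
From Stdlib Require Import Reals Lra Lia.
From Coquelicot Require Import Coquelicot.
Open Scope R_scope.
Definition gf (s t : R) := Rpower t (s - 1) * exp (- t).
Lemma ballR (x e y : R) : ball x e y <-> Rabs (y - x) < e.
Proof. split; intro H; exact H. Qed.
Lemma gf_pos s t : 0 < gf s t.
Proof. unfold gf, Rpower. apply Rmult_lt_0_compat; apply exp_pos. Qed.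
Lemma gf_cont s t : 0 < t -> continuous (gf s) t.
Proof.
  intro Ht. apply (ex_derive_continuous (K:=R_AbsRing) (V:=R_NormedModule)). unfold gf, Rpower.
  auto_derive. lra.
Qed.
Lemma gf_exRInt s a b : 0 < a -> 0 < b -> ex_RInt (gf s) a b.
Proof.
  intros Ha Hb. apply (ex_RInt_continuous (V:=R_CompleteNormedModule)). intros z Hz.
  apply gf_cont. assert (0 < Rmin a b) by (apply Rmin_glb_lt; lra). lra.
Qed.

Lemma rp_der s x : 0 < s -> 0 < x -> is_derive (fun t => Rpower t s / s) x (Rpower x (s-1)).
Proof.
  intros Hs Hx. unfold Rpower. auto_derive. lra.
  replace ((s-1)*ln x) with (s*ln x + - ln x) by ring.
  rewrite exp_plus, exp_Ropp, exp_ln by lra. field. lra.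
Qed.

Lemma rp_cont s x : 0 < x -> continuous (fun t => Rpower t (s-1)) x.
Proof.
  intro Hx. apply (ex_derive_continuous (K:=R_AbsRing) (V:=R_NormedModule)). unfold Rpower.
  auto_derive. lra.
Qed.

Lemma rp_int s u v : 0 < s -> 0 < u -> 0 < v ->
  is_RInt (fun t => Rpower t (s-1)) u v ((Rpower v s - Rpower u s)/s).
Proof.
  intros Hs Hu Hv.
  assert (Hm : 0 < Rmin u v) by (apply Rmin_glb_lt; lra).
  replace ((Rpower v s - Rpower u s)/s) with (minus (Rpower v s / s) (Rpower u s / s)).
  2:{ unfold minus, plus, opp; simpl. field. lra. }
  apply (is_RInt_derive (V:=R_CompleteNormedModule) (fun t => Rpower t s / s)).
  - intros x Hx. apply rp_der; lra.
  - intros x Hx. apply rp_cont; lra.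
Qed.

Lemma near0_le s u v : 0 < s -> 0 < u -> u <= v ->
  0 <= RInt (gf s) u v <= Rpower v s / s.
Proof.
  intros Hs Hu Huv. split.
  - apply RInt_ge_0; auto. apply gf_exRInt; lra. intros; left; apply gf_pos.
  - apply Rle_trans with (RInt (fun t => Rpower t (s-1)) u v).
    + apply RInt_le; auto. apply gf_exRInt; lra.
      eexists; apply rp_int; lra.
      intros x Hx. unfold gf. rewrite <- (Rmult_1_r (Rpower x (s-1))) at 2.
      apply Rmult_le_compat_l. unfold Rpower; left; apply exp_pos.
      rewrite <- exp_0. left. apply exp_increasing. lra.
    + rewrite (is_RInt_unique _ _ _ _ (rp_int s u v Hs Hu ltac:(lra))).
      assert (0 < Rpower u s) by (unfold Rpower; apply exp_pos). 
      apply Rmult_le_compat_r. left; apply Rinv_0_lt_compat; lra. lra.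
Qed.

Lemma near0_abs s u v d : 0 < s -> 0 < u -> 0 < v -> u <= d -> v <= d ->
  Rabs (RInt (gf s) u v) <= Rpower d s / s.
Proof.
  intros Hs Hu Hv Hud Hvd.
  assert (Hd : forall w, 0 < w -> w <= d -> Rpower w s / s <= Rpower d s / s).
  { intros w Hw Hwd. apply Rmult_le_compat_r. left; apply Rinv_0_lt_compat; lra.
    apply Rle_Rpower_l; lra. }
  destruct (Rle_dec u v) as [Huv|Huv].
  - destruct (near0_le s u v Hs Hu Huv). rewrite Rabs_pos_eq by lra.
    specialize (Hd v Hv Hvd). lra.
  - rewrite <- opp_RInt_swap by (apply gf_exRInt; lra). destruct (near0_le s v u Hs Hv ltac:(lra)).
    change (opp (RInt (gf s) v u)) with (- RInt (gf s) v u).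
    rewrite Rabs_Ropp, Rabs_pos_eq by lra.
    specialize (Hd u Hu Hud). lra.
Qed.

Lemma exp_pow_nat (y : R) (m : nat) : exp y ^ m = exp (INR m * y).
Proof.
  induction m. simpl. rewrite Rmult_0_l, exp_0. reflexivity.
  rewrite S_INR. simpl. rewrite IHm. rewrite <- exp_plus. f_equal. ring.
Qed.

Lemma tail_bound s : exists C, 0 < C /\ forall t, 1 <= t -> gf s t <= C * exp (- t / 2).
Proof.
  destruct (INR_unbounded (s-1)) as [m Hm].
  set (M := INR m + 1).
  assert (HM : 0 < M) by (unfold M; pose proof (pos_INR m); lra).
  exists ((2*M)^m). split. apply pow_lt; lra.
  intros t Ht. unfold gf.
  assert (H1 : Rpower t (s-1) <= t ^ m).
  { rewrite <- Rpower_pow by lra. apply Rle_Rpower; lra. }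
  assert (H2 : t ^ m <= (2*M)^m * exp (t/2)).
  { replace (t ^ m) with ((2*M)^m * (t/(2*M))^m).
    2:{ rewrite <- Rpow_mult_distr. f_equal. field. lra. }
    apply Rmult_le_compat_l. apply pow_le; lra.
    apply Rle_trans with (exp (t/(2*M)) ^ m).
    apply pow_incr. split. apply Rmult_le_pos; [lra|left; apply Rinv_0_lt_compat; lra].
    pose proof (exp_ineq1_le (t/(2*M))). lra.
    rewrite exp_pow_nat.
    left. apply exp_increasing.
    apply Rlt_le_trans with (M * (t/(2*M))).
    apply Rmult_lt_compat_r. apply Rdiv_lt_0_compat; lra. unfold M; lra.
    right. field. lra. }
  apply Rle_trans with ((2*M)^m * exp (t/2) * exp (-t)).
  apply Rmult_le_compat_r. left; apply exp_pos. lra.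
  rewrite Rmult_assoc, <- exp_plus. right. f_equal. f_equal. field.
Qed.

Lemma ce_int C u v : is_RInt (fun t => C * exp (- t / 2)) u v
   (2 * C * (exp (- u / 2) - exp (- v / 2))).
Proof.
  replace (2 * C * (exp (- u / 2) - exp (- v / 2))) with
    (minus (-2 * C * exp (- v / 2)) (-2 * C * exp (- u / 2))).
  2:{ unfold minus, plus, opp; simpl. ring. }
  apply (is_RInt_derive (V:=R_CompleteNormedModule) (fun t => -2 * C * exp (- t / 2))).
  - intros x Hx. auto_derive. auto. unfold Rdiv. set (e := exp _). field.
  - intros x Hx. apply (ex_derive_continuous (K:=R_AbsRing) (V:=R_NormedModule)).
    auto_derive. auto.
Qed.

Lemma tail_le s C u v : 0 < C -> (forall t, 1 <= t -> gf s t <= C * exp (- t / 2)) ->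
  1 <= u -> u <= v -> 0 <= RInt (gf s) u v <= 2 * C * exp (- u / 2).
Proof.
  intros HC Hb Hu Huv. split.
  - apply RInt_ge_0; auto. apply gf_exRInt; lra. intros; left; apply gf_pos.
  - apply Rle_trans with (RInt (fun t => C * exp (- t / 2)) u v).
    + apply RInt_le; auto. apply gf_exRInt; lra.
      eexists; apply ce_int.
      intros x Hx. apply Hb. lra.
    + rewrite (is_RInt_unique _ _ _ _ (ce_int C u v)).
      pose proof (exp_pos (- v / 2)).
      assert (0 < 2 * C) by lra. 
      apply Rmult_le_compat_l; lra.
Qed.

Lemma tail_abs s C u v L : 0 < C -> (forall t, 1 <= t -> gf s t <= C * exp (- t / 2)) ->
  1 <= L -> L <= u -> L <= v -> Rabs (RInt (gf s) u v) <= 2 * C * exp (- L / 2).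
Proof.
  intros HC Hb HL Hu Hv.
  assert (HE : forall w, L <= w -> 2 * C * exp (- w / 2) <= 2 * C * exp (- L / 2)).
  { intros w Hw. apply Rmult_le_compat_l. lra.
    destruct (Req_dec w L). subst; lra. left; apply exp_increasing; lra. }
  destruct (Rle_dec u v) as [Huv|Huv].
  - destruct (tail_le s C u v HC Hb ltac:(lra) Huv). rewrite Rabs_pos_eq by lra.
    specialize (HE u Hu). lra.
  - rewrite <- opp_RInt_swap by (apply gf_exRInt; lra).
    destruct (tail_le s C v u HC Hb ltac:(lra) ltac:(lra)).
    change (opp (RInt (gf s) v u)) with (- RInt (gf s) v u).
    rewrite Rabs_Ropp, Rabs_pos_eq by lra.
    specialize (HE v Hv). lra.
Qed.

Lemma at_right_0_intro (d : R) (P : R -> Prop) : 0 < d ->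
  (forall a, 0 < a < d -> P a) -> at_right 0 P.
Proof.
  intros Hd HP. exists (mkposreal d Hd). intros y Hy Hy0.
  pose proof (proj1 (ballR 0 d y) Hy) as H. apply HP. rewrite Rminus_0_r in H.
  rewrite Rabs_pos_eq in H by lra. lra.
Qed.

Lemma gamma_lim s : 0 < s -> exists l,
  filterlim (fun ab : R * R => RInt (gf s) (fst ab) (snd ab))
    (filter_prod (at_right 0) (Rbar_locally p_infty)) (locally l).
Proof.
  intros Hs. destruct (tail_bound s) as [C [HC Hb]].
  apply (filterlim_locally_cauchy (F := filter_prod (at_right 0) (Rbar_locally p_infty))).
  intro eps. pose proof (cond_pos eps) as He.
  set (d := Rpower (s * eps / 4) (/ s)).
  assert (Hd : 0 < d) by (unfold d, Rpower; apply exp_pos).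
  assert (Hds : Rpower d s / s = eps / 4).
  { unfold d. rewrite Rpower_mult, Rinv_l, Rpower_1 by (try (apply Rdiv_lt_0_compat; [apply Rmult_lt_0_compat|]); lra). field. lra. }
  set (L := Rmax 1 (- 2 * ln (eps / (8*C)))).
  assert (HL1 : 1 <= L) by apply Rmax_l.
  assert (HL : 2 * C * exp (- L / 2) <= eps / 4).
  { apply Rle_trans with (2 * C * exp (ln (eps / (8 * C)))).
    apply Rmult_le_compat_l. lra.
    assert (- 2 * ln (eps / (8*C)) <= L) by apply Rmax_r.
    destruct (Req_dec (- L / 2) (ln (eps / (8 * C)))) as [E|E]. rewrite E; lra.
    left; apply exp_increasing; lra.
    rewrite exp_ln. right. field. lra. apply Rdiv_lt_0_compat; lra. }
  exists (fun ab : R * R => 0 < fst ab < d /\ L < snd ab). split.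
  - apply Filter_prod with (fun a => 0 < a < d) (fun b => L < b).
    apply (at_right_0_intro d); auto.
    exists L. auto.
    intros; simpl; auto.
  - intros [a b] [a' b'] [Ha Hb'] [Ha' Hb'']; simpl in *.
    apply ballR.
    assert (E1 := RInt_Chasles (gf s) a a' b (gf_exRInt s a a' ltac:(lra) ltac:(lra)) (gf_exRInt s a' b ltac:(lra) ltac:(lra))).
    assert (E2 := RInt_Chasles (gf s) a' b' b (gf_exRInt s a' b' ltac:(lra) ltac:(lra)) (gf_exRInt s b' b ltac:(lra) ltac:(lra))).
    change plus with Rplus in E1, E2. simpl in E1, E2.
    pose proof (near0_abs s a a' d Hs ltac:(lra) ltac:(lra) ltac:(lra) ltac:(lra)) as B1.
    pose proof (tail_abs s C b' b L HC Hb HL1 ltac:(lra) ltac:(lra)) as B2.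
    rewrite Hds in B1.
    replace (RInt (gf s) a' b' - RInt (gf s) a b) with (- (RInt (gf s) a a' + RInt (gf s) b' b)) by lra.
    rewrite Rabs_Ropp. eapply Rle_lt_trans. apply Rabs_triang. lra.
Qed.

Definition FG := filter_prod (at_right 0) (Rbar_locally p_infty).

Lemma FG_proper : ProperFilter FG.
Proof. exact (@filter_prod_proper _ _ _ _ (at_right_proper_filter 0) (Rbar_locally_filter p_infty)). Qed.

Lemma FG_pos (P : R -> R -> Prop) (d L : R) : 0 < d ->
  (forall a b, 0 < a < d -> L < b -> P a b) -> FG (fun ab => P (fst ab) (snd ab)).
Proof.
  intros Hd HP. apply Filter_prod with (fun a => 0 < a < d) (fun b => L < b).
  apply (at_right_0_intro d); auto. exists L; auto. intros; simpl; auto.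
Qed.

Lemma lim_ge {T} (F : (T -> Prop) -> Prop) (FF : ProperFilter F) (f : T -> R) l c :
  filterlim f F (locally l) -> F (fun x => c <= f x) -> c <= l.
Proof.
  intros Hl Hc. destruct (Rle_dec c l) as [|Hn]; auto. exfalso.
  assert (He : 0 < c - l) by lra.
  pose proof (proj1 (filterlim_locally f l) Hl (mkposreal _ He)) as H.
  destruct (filter_ex _ (filter_and _ _ H Hc)) as [x [H1 H2]].
  pose proof (proj1 (ballR _ _ _) H1) as H3. simpl in H3. apply Rabs_def2 in H3. apply Rabs_def2 in H1. lra.
Qed.

Lemma gamma_correct s : 0 < s -> is_RInt_gen (gf s) (at_right 0) (Rbar_locally p_infty) (Gamma s).
Proof.
  intros Hs. destruct (gamma_lim s Hs) as [l Hl].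
  assert (H : is_RInt_gen (gf s) (at_right 0) (Rbar_locally p_infty) l).
  { unfold is_RInt_gen.
    apply (filterlimi_lim_ext_loc (fun ab : R * R => RInt (gf s) (fst ab) (snd ab))); auto.

    apply (FG_pos (fun a b => is_RInt (gf s) a b (RInt (gf s) a b)) 1 0). lra.
    intros a b Ha Hb. apply (RInt_correct (V:=R_CompleteNormedModule)). apply gf_exRInt; lra. }
  replace (Gamma s) with l. exact H.
  symmetry. unfold Gamma. apply (is_RInt_gen_unique (gf s) l H).
Qed.

Lemma gamma_pos s : 0 < s -> 0 < Gamma s.
Proof.
  intros Hs. destruct (gamma_lim s Hs) as [l Hl].
  assert (H : is_RInt_gen (gf s) (at_right 0) (Rbar_locally p_infty) l).
  { unfold is_RInt_gen.
    apply (filterlimi_lim_ext_loc (fun ab : R * R => RInt (gf s) (fst ab) (snd ab))); auto.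

    apply (FG_pos (fun a b => is_RInt (gf s) a b (RInt (gf s) a b)) 1 0). lra.
    intros a b Ha Hb. apply (RInt_correct (V:=R_CompleteNormedModule)). apply gf_exRInt; lra. }
  replace (Gamma s) with l.
  2:{ symmetry. unfold Gamma. apply (is_RInt_gen_unique (gf s) l H). }
  assert (Hc : 0 < RInt (gf s) 1 2).
  { apply RInt_gt_0. lra. intros; apply gf_pos. intros; apply gf_cont; lra. }
  apply Rlt_le_trans with (RInt (gf s) 1 2); auto.
  apply (lim_ge FG FG_proper _ l _ Hl).
  apply (FG_pos (fun a b => RInt (gf s) 1 2 <= RInt (gf s) a b) 1 2). lra.
  intros a b Ha Hb.
  assert (E1 := RInt_Chasles (gf s) a 1 b (gf_exRInt s a 1 ltac:(lra) ltac:(lra)) (gf_exRInt s 1 b ltac:(lra) ltac:(lra))).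
  assert (E2 := RInt_Chasles (gf s) 1 2 b (gf_exRInt s 1 2 ltac:(lra) ltac:(lra)) (gf_exRInt s 2 b ltac:(lra) ltac:(lra))).
  change plus with Rplus in E1, E2. simpl in E1, E2.
  destruct (near0_le s a 1 Hs ltac:(lra) ltac:(lra)).
  assert (0 <= RInt (gf s) 2 b).
  { apply RInt_ge_0. lra. apply gf_exRInt; lra. intros; left; apply gf_pos. }
  lra.
Qed.

Lemma F_der s t : 0 < t -> is_derive (fun t => gf (s+1) t) t (s * gf s t - gf (s+1) t).
Proof.
  intros Ht. unfold gf, Rpower. auto_derive. lra.
  replace (s+1-1) with s by ring.
  replace ((s-1)*ln t) with (s*ln t + - ln t) by ring.
  rewrite exp_plus, (exp_Ropp (ln t)), exp_ln by lra.
  set (e1 := exp (s * ln t)); set (e2 := exp (-t)). field. lra.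
Qed.

Lemma F_lim0 s : 0 < s -> filterlim (fun t => gf (s+1) t) (at_right 0) (locally 0).
Proof.
  intros Hs. apply (proj2 (filterlim_locally _ _)). intro eps. pose proof (cond_pos eps).
  set (d := Rpower (eps/2) (/ s)).
  assert (Hd : 0 < d) by (unfold d, Rpower; apply exp_pos).
  assert (Hds : Rpower d s = eps / 2).
  { unfold d. rewrite Rpower_mult, Rinv_l, Rpower_1 by lra. reflexivity. }
  apply (at_right_0_intro d). auto. intros a Ha.
  apply ballR. unfold gf. replace (s+1-1) with s by ring.
  rewrite Rminus_0_r, Rabs_pos_eq.
  2:{ apply Rmult_le_pos; left; [unfold Rpower|]; apply exp_pos. }
  assert (Rpower a s <= Rpower d s) by (apply Rle_Rpower_l; lra).
  assert (exp (-a) <= 1) by (rewrite <- exp_0; left; apply exp_increasing; lra).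
  assert (0 < Rpower a s) by (unfold Rpower; apply exp_pos).
  apply Rle_lt_trans with (Rpower a s * 1). apply Rmult_le_compat_l; lra. lra.
Qed.

Lemma F_liminf s : filterlim (fun t => gf (s+1) t) (Rbar_locally p_infty) (locally 0).
Proof.
  destruct (tail_bound (s+1)) as [C [HC Hb]].
  apply (proj2 (filterlim_locally _ _)). intro eps. pose proof (cond_pos eps).
  set (L := Rmax 1 (- 2 * ln (eps / (2*C)))).
  exists L. intros t Ht.
  assert (HL1 : 1 <= L) by apply Rmax_l.
  assert (HL2 : - 2 * ln (eps / (2*C)) <= L) by apply Rmax_r.
  apply ballR. rewrite Rminus_0_r, Rabs_pos_eq by (left; apply gf_pos).
  apply Rle_lt_trans with (C * exp (- t / 2)). apply Hb; lra.
  apply Rlt_le_trans with (C * exp (ln (eps / (2 * C)))).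
  apply Rmult_lt_compat_l; auto. apply exp_increasing. lra.
  rewrite exp_ln. apply Rle_trans with (eps/2). right; field; lra. lra.
  apply Rdiv_lt_0_compat; lra.
Qed.

Lemma gamma_rec s : 0 < s -> Gamma (s + 1) = s * Gamma s.
Proof.
  intros Hs.
  assert (H1 := is_RInt_gen_Derive (Fa := at_right 0) (Fb := Rbar_locally p_infty)
     (fun t => gf (s+1) t) 0 0).
  assert (HD : forall x, 0 < x -> Derive (fun t => gf (s+1) t) x = s * gf s x - gf (s+1) x).
  { intros x Hx. apply is_derive_unique. apply F_der; auto. }
  specialize (H1 ltac:(apply (FG_pos (fun a b => forall x, Rmin a b <= x <= Rmax a b -> ex_derive (fun t => gf (s + 1) t) x) 1 0); [lra| intros a b Ha Hb x Hx; assert (0 < Rmin a b) by (apply Rmin_glb_lt; lra); eexists; apply F_der; lra])).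
  assert (HC : forall x, 0 < x -> continuous (Derive (fun t => gf (s + 1) t)) x).
  { intros x Hx.
    apply (continuous_ext_loc (T:=R_UniformSpace) (U:=R_UniformSpace) _ (fun y => s * gf s y - gf (s+1) y)).
    apply (locally_interval _ x 0 p_infty). simpl; lra. simpl; auto.
    intros y Hy _. simpl in Hy. symmetry. apply HD. lra.
    apply (ex_derive_continuous (K:=R_AbsRing) (V:=R_NormedModule)).
    unfold gf, Rpower. auto_derive. lra. }
  specialize (H1 ltac:(apply (FG_pos (fun a b => forall x, Rmin a b <= x <= Rmax a b -> continuous (Derive (fun t => gf (s + 1) t)) x) 1 0); [lra| intros a b Ha Hb x Hx; assert (0 < Rmin a b) by (apply Rmin_glb_lt; lra); apply HC; lra])).
  specialize (H1 (F_lim0 s Hs) (F_liminf s)).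
  assert (H2 : is_RInt_gen (fun t => s * gf s t - gf (s+1) t) (at_right 0) (Rbar_locally p_infty) 0).
  { rewrite Rminus_0_r in H1.
    apply (is_RInt_gen_ext (Derive (fun t => gf (s + 1) t))); auto.
    apply (FG_pos (fun a b => forall x, Rmin a b < x < Rmax a b -> Derive (fun t => gf (s + 1) t) x = s * gf s x - gf (s+1) x) 1 0). lra.
    intros a b Ha Hb x Hx. assert (0 < Rmin a b) by (apply Rmin_glb_lt; lra). apply HD; lra. }
  assert (H3 := is_RInt_gen_minus _ _ _ _ (is_RInt_gen_scal _ s _ (gamma_correct s Hs)) H2).
  assert (H4 : is_RInt_gen (gf (s+1)) (at_right 0) (Rbar_locally p_infty) (s * Gamma s)).
  { replace (s * Gamma s) with (minus (scal s (Gamma s)) 0).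
    2:{ unfold minus, plus, opp, scal; simpl. unfold mult; simpl. ring. }
    refine (is_RInt_gen_ext _ _ _ (filter_forall _ _) H3).
    intros; unfold minus, plus, opp, scal; simpl. unfold mult; simpl. ring. }
  unfold Gamma at 1. apply (is_RInt_gen_unique (gf (s+1)) _ H4).
Qed.

Lemma amgm_pt y lam x : 0 < lam -> 0 < x -> gf (y + /2) x <= (lam * gf y x + gf (y+1) x / lam) / 2.
Proof.
  intros Hl Hx.
  assert (E : gf (y + /2) x * gf (y + /2) x = gf y x * gf (y+1) x).
  { unfold gf, Rpower. rewrite <- !exp_plus. f_equal. field. }
  pose proof (gf_pos y x) as Pp. pose proof (gf_pos (y+1) x) as Qp. pose proof (gf_pos (y + /2) x) as Gp.
  set (P := gf y x) in *. set (Q := gf (y+1) x) in *. set (G := gf (y + /2) x) in *.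
  assert (H1 : 0 <= P * (lam * lam * P - 2 * lam * G + Q)).
  { replace (P * (lam * lam * P - 2 * lam * G + Q)) with ((lam * P - G) * (lam * P - G)) by nra.
    apply Rle_0_sqr. }
  assert (H2 : 0 <= lam * lam * P - 2 * lam * G + Q).
  { apply Rmult_le_reg_l with P. auto. rewrite Rmult_0_r. auto. }
  apply Rmult_le_reg_l with (2 * lam). lra.
  replace (2 * lam * ((lam * P + Q / lam) / 2)) with (lam * lam * P + Q) by (field; lra).
  lra.
Qed.

Lemma gamma_amgm y lam : 0 < y -> 0 < lam ->
  Gamma (y + /2) <= (lam * Gamma y + Gamma (y+1) / lam) / 2.
Proof.
  intros Hy Hl.
  assert (Hg := is_RInt_gen_scal (Fa := at_right 0) (Fb := Rbar_locally p_infty) _ (/2) _ (is_RInt_gen_plus (Fa := at_right 0) (Fb := Rbar_locally p_infty) _ _ _ _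
      (is_RInt_gen_scal (Fa := at_right 0) (Fb := Rbar_locally p_infty) _ lam _ (gamma_correct y Hy))
      (is_RInt_gen_scal (Fa := at_right 0) (Fb := Rbar_locally p_infty) _ (/lam) _ (gamma_correct (y+1) ltac:(lra))))).
  assert (Hf := gamma_correct (y + /2) ltac:(lra)).
  assert (Hp : forall a b, 0 < a < 1 -> 1 < b -> forall x, a <= x <= b -> norm (gf (y + /2) x) <=
         scal (/2) (plus (scal lam (gf y x)) (scal (/lam) (gf (y+1) x)))).
  { intros a b Ha Hb x Hx. unfold norm, scal, plus; simpl; unfold mult; simpl.
    rewrite Rabs_pos_eq by (left; apply gf_pos).
    eapply Rle_trans. apply (amgm_pt y lam x); lra. right. field. lra. }
  assert (H := RInt_gen_norm (Fa := at_right 0) (Fb := Rbar_locally p_infty) _ _ _ _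
     (FG_pos (fun a b => a <= b) 1 1 ltac:(lra) ltac:(intros; lra))
     (FG_pos (fun a b => forall x, a <= x <= b -> norm (gf (y + /2) x) <=
         scal (/2) (plus (scal lam (gf y x)) (scal (/lam) (gf (y+1) x)))) 1 1 ltac:(lra) Hp) Hf Hg).
  replace ((lam * Gamma y + Gamma (y + 1) / lam) / 2) with
     (scal (/ 2) (plus (scal lam (Gamma y)) (scal (/ lam) (Gamma (y + 1))))).
  eapply Rle_trans. 2: exact H. unfold norm; simpl. apply Rle_abs.
  unfold scal, plus; simpl; unfold mult; simpl. field. lra.
Qed.

Lemma ln_le_sub1 z : 0 < z -> ln z <= z - 1.
Proof. intros Hz. pose proof (exp_ineq1_le (ln z)). rewrite exp_ln in H by auto. lra. Qed.

Lemma ln_ge_1 z : 0 < z -> 1 - / z <= ln z.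
Proof.
  intros Hz. pose proof (ln_le_sub1 (/ z) (Rinv_0_lt_compat _ Hz)).
  rewrite ln_Rinv in H by auto. lra.
Qed.

Lemma lim_inv_N : is_lim_seq (fun N => / INR N) 0.
Proof.
  replace (Finite 0) with (Rbar_inv p_infty) by reflexivity.
  apply is_lim_seq_inv. apply is_lim_seq_INR. discriminate.
Qed.

Lemma lim_inv_lin c : 0 < c -> is_lim_seq (fun N => / (c + INR N)) 0.
Proof.
  intros Hc. replace (Finite 0) with (Rbar_inv p_infty) by reflexivity.
  apply is_lim_seq_inv. 2: discriminate.
  apply (is_lim_seq_le_p_loc INR). exists O. intros n _. lra.
  apply is_lim_seq_INR.
Qed.

Lemma lim_ln_shift c : is_lim_seq (fun N => ln (c + INR N) - ln (INR N)) 0.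
Proof.
  assert (H1 : is_lim_seq (fun N => 1 + c * / INR N) 1).
  { pose proof (is_lim_seq_plus' _ _ 1 (c * 0) (is_lim_seq_const 1)
       (is_lim_seq_mult' _ _ c 0 (is_lim_seq_const c) lim_inv_N)) as H.
    rewrite Rmult_0_r, Rplus_0_r in H. exact H. }
  assert (Hc : continuity_pt ln 1).
  { apply derivable_continuous_pt. exists (/ 1). apply derivable_pt_lim_ln. lra. }
  pose proof (is_lim_seq_continuous ln _ 1 Hc H1) as H2. rewrite ln_1 in H2.
  apply (is_lim_seq_ext_loc (fun N => ln (1 + c * / INR N))); auto.
  destruct (INR_unbounded (Rabs c)) as [m Hm].
  exists (S m). intros n Hn.
  assert (Hn' : INR m < INR n) by (apply lt_INR; lia).
  pose proof (pos_INR m).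
  assert (Hcn : 0 < c + INR n) by (pose proof (Rle_abs (- c)); rewrite Rabs_Ropp in H0; lra).
  rewrite <- ln_div by lra. f_equal. field. lra.
Qed.

Definition Dg (y : R) := ln (Gamma (y + /2)) - ln (Gamma y) - / 2 * ln y.

Lemma Rpower_half y : 0 < y -> Rpower y (/2) * Rpower y (/2) = y.
Proof. intros Hy. rewrite <- Rpower_plus. replace (/2 + /2) with 1 by field. apply Rpower_1; auto. Qed.

Lemma ln_Rpower_half y : ln (Rpower y (/2)) = / 2 * ln y.
Proof. unfold Rpower. apply ln_exp. Qed.

Lemma Dg_bounds y : 0 < y -> / 2 * (ln y - ln (y + /2)) <= Dg y <= 0.
Proof.
  intros Hy. unfold Dg.
  pose proof (gamma_pos y Hy) as G0. pose proof (gamma_pos (y + /2) ltac:(lra)) as G1.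
  split.
  - set (r := Rpower (y + /2) (/2)).
    assert (Hr : 0 < r) by (unfold r, Rpower; apply exp_pos).
    pose proof (gamma_amgm (y + /2) r ltac:(lra) Hr) as H.
    replace (y + /2 + /2) with (y + 1) in H by field.
    rewrite gamma_rec in H by auto.
    replace (Gamma (y + / 2 + 1)) with ((y + /2) * Gamma (y + /2)) in H.
    2:{ rewrite gamma_rec; auto. lra. }
    set (G' := Gamma (y + /2)) in *.
    rewrite <- (Rpower_half (y + /2)) in H by lra. fold r in H.
    replace ((r * G' + r * r * G' / r) / 2) with (r * G') in H by (field; lra).
    apply ln_le in H. 2: apply Rmult_lt_0_compat; auto.
    rewrite !ln_mult in H by auto. unfold r in H. rewrite ln_Rpower_half in H. lra.
  - set (r := Rpower y (/2)).
    assert (Hr : 0 < r) by (unfold r, Rpower; apply exp_pos).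
    pose proof (gamma_amgm y r Hy Hr) as H.
    rewrite gamma_rec in H by auto.
    set (G' := Gamma y) in *. set (G2 := Gamma (y + /2)) in *.
    rewrite <- (Rpower_half y) in H by lra. fold r in H.
    replace ((r * G' + r * r * G' / r) / 2) with (r * G') in H by (field; lra).
    apply ln_le in H. 2: auto.
    rewrite !ln_mult in H by auto. unfold r in H. rewrite ln_Rpower_half in H. lra.
Qed.

Lemma Dg_abs y : 0 < y -> Rabs (Dg y) <= / (4 * y).
Proof.
  intros Hy. destruct (Dg_bounds y Hy).
  pose proof (ln_le_sub1 ((y + /2) / y) ltac:(apply Rdiv_lt_0_compat; lra)).
  rewrite ln_div in H1 by lra.
  rewrite Rabs_left1 by lra.
  apply Rle_trans with (/2 * (ln (y + /2) - ln y)). lra.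
  apply Rle_trans with (/2 * ((y + /2) / y - 1)). apply Rmult_le_compat_l; lra.
  right. field. lra.
Qed.

Lemma lim_Dg c : 0 < c -> is_lim_seq (fun N => Dg (c + INR N)) 0.
Proof.
  intros Hc.
  assert (H1 : is_lim_seq (fun N => / 4 * / (c + INR N)) 0).
  { replace (Finite 0) with (Rbar_mult (/4) 0) by (simpl; f_equal; ring).
    apply is_lim_seq_scal_l. apply lim_inv_lin; auto. }
  apply (is_lim_seq_le_le (fun N => - (/ 4 * / (c + INR N))) _ (fun N => / 4 * / (c + INR N))); auto.
  - intros n. pose proof (pos_INR n). pose proof (Dg_abs (c + INR n) ltac:(lra)).
    rewrite Rinv_mult in H0. apply Rabs_le_between in H0 || (apply Rabs_def2b in H0 || idtac).
    split; [|]; (apply Rabs_le_between_Rmax; fail) || (pose proof (Rle_abs (Dg (c + INR n))); pose proof (Rle_abs (- Dg (c + INR n))); rewrite Rabs_Ropp in *; lra).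
  - replace (Finite 0) with (Rbar_opp 0) by (simpl; f_equal; ring).
    apply -> is_lim_seq_opp. auto.
Qed.

Lemma Lk a : 0 < a -> forall k : nat, is_lim_seq (fun N => ln (Gamma (a + INR k / 2 + INR N))
   - ln (Gamma (a + INR N)) - INR k / 2 * ln (INR N)) 0.
Proof.
  intros Ha k. induction k as [|k IHk].
  - apply (is_lim_seq_ext (fun _ => 0)). 2: apply is_lim_seq_const.
    intros N. simpl. replace (a + 0 / 2 + INR N) with (a + INR N) by field. unfold Rdiv. ring.
  - set (c := a + INR k / 2).
    assert (Hc : 0 < c) by (unfold c; pose proof (pos_INR k); lra).
    pose proof (is_lim_seq_plus' _ _ 0 (/2 * 0) (lim_Dg c Hc)
       (is_lim_seq_mult' _ _ (/2) 0 (is_lim_seq_const (/2)) (lim_ln_shift c))) as H0.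
    rewrite Rmult_0_r, !Rplus_0_r in H0.
    pose proof (is_lim_seq_plus' _ _ 0 0 IHk H0) as H.
    rewrite Rplus_0_r in H.
    apply (is_lim_seq_ext _ _ _ ltac:(idtac) H) || (eapply is_lim_seq_ext; [|exact H]).
    intros N. unfold Dg. fold c.
    replace (a + INR (S k) / 2 + INR N) with (c + INR N + /2) by (unfold c; rewrite S_INR; field).
    rewrite S_INR. field.
Qed.

Lemma harm_lb n : ln (INR (S (S n))) <= harmonic (S n).
Proof.
  induction n.
  - change (harmonic 1) with (0 + / INR 1). change (INR 2) with 2. change (INR 1) with 1.
    pose proof (ln_le_sub1 2 ltac:(lra)). rewrite Rinv_1. lra.
  - change (harmonic (S (S n))) with (harmonic (S n) + / INR (S (S n))).
    rewrite (S_INR (S (S n))) in *.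
    pose proof (pos_INR (S (S n))) as P.
    assert (P1 : 0 < INR (S (S n))) by (rewrite S_INR; pose proof (pos_INR (S n)); lra).
    pose proof (ln_le_sub1 ((INR (S (S n)) + 1) / INR (S (S n))) ltac:(apply Rdiv_lt_0_compat; lra)) as H.
    rewrite ln_div in H by lra.
    replace ((INR (S (S n)) + 1) / INR (S (S n)) - 1) with (/ INR (S (S n))) in H by (field; lra).
    lra.
Qed.

Lemma euler_lim : is_lim_seq (fun n => harmonic n - ln (INR n)) euler_gamma.
Proof.
  set (u := fun n => harmonic (S n) - ln (INR (S n))).
  assert (Hd : forall n, u (S n) <= u n).
  { intros n. unfold u.
    change (harmonic (S (S n))) with (harmonic (S n) + / INR (S (S n))).
    assert (P1 : 0 < INR (S n)) by (apply lt_0_INR; lia).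
    assert (P2 : INR (S (S n)) = INR (S n) + 1) by apply S_INR.
    pose proof (ln_ge_1 (INR (S (S n)) / INR (S n)) ltac:(apply Rdiv_lt_0_compat; lra)) as H.
    rewrite ln_div in H by lra.
    replace (1 - / (INR (S (S n)) / INR (S n))) with (/ INR (S (S n))) in H by (rewrite P2; field; lra).
    lra. }
  assert (Hb : forall n, 0 <= u n).
  { intros n. unfold u. pose proof (harm_lb n).
    assert (P1 : 0 < INR (S n)) by (apply lt_0_INR; lia).
    assert (ln (INR (S n)) <= ln (INR (S (S n)))) by (apply ln_le; [lra| rewrite (S_INR (S n)); lra]).
    lra. }
  destruct (ex_finite_lim_seq_decr u 0 Hd Hb) as [l Hl].
  assert (H : is_lim_seq (fun n => harmonic n - ln (INR n)) l).
  { apply is_lim_seq_incr_1. exact Hl. }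
  unfold euler_gamma. rewrite (is_lim_seq_unique _ _ H). exact H.
Qed.

Lemma rising_pos y k : 0 < y -> 0 < rising y k.
Proof.
  intros Hy. induction k. simpl; lra.
  simpl. apply Rmult_lt_0_compat; auto. pose proof (pos_INR k); lra.
Qed.

Lemma rising_shift y k : rising (y + 1) k * y = rising y k * (y + INR k).
Proof.
  induction k. simpl. ring.
  change (rising (y + 1) (S k)) with (rising (y + 1) k * (y + 1 + INR k)).
  change (rising y (S k)) with (rising y k * (y + INR k)).
  rewrite S_INR.
  transitivity (rising (y + 1) k * y * (y + 1 + INR k)). ring.
  rewrite IHk. ring.
Qed.

Lemma ln_rising_shift y k : 0 < y -> ln (rising (y + 1) k) - ln (rising y k) = ln (y + INR k) - ln y.
Proof.
  intros Hy. pose proof (rising_pos y k Hy). pose proof (rising_pos (y+1) k ltac:(lra)).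
  pose proof (pos_INR k).
  pose proof (f_equal ln (rising_shift y k)) as E.
  rewrite !ln_mult in E by lra. lra.
Qed.

Lemma gamma_rising z N : 0 < z -> Gamma (z + INR N) = rising z N * Gamma z.
Proof.
  intros Hz. induction N.
  - simpl. rewrite Rplus_0_r. ring.
  - rewrite S_INR. replace (z + (INR N + 1)) with ((z + INR N) + 1) by ring.
    rewrite gamma_rec by (pose proof (pos_INR N); lra). rewrite IHN.
    change (rising z (S N)) with (rising z N * (z + INR N)). ring.
Qed.

Lemma ln_rising_lim x k : 0 < x ->
  is_lim_seq (fun n => ln (rising (INR n + x - 1) k) - INR k * ln (INR n)) 0.
Proof.
  intros Hx. induction k as [|k IHk].
  - apply (is_lim_seq_ext (fun _ => 0)). 2: apply is_lim_seq_const.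
    intros n. simpl. rewrite ln_1. ring.
  - pose proof (is_lim_seq_plus' _ _ 0 0 IHk (lim_ln_shift (x - 1 + INR k))) as H.
    rewrite Rplus_0_r in H.
    apply (is_lim_seq_ext_loc _ _ _ ltac:(idtac) H) || (eapply is_lim_seq_ext_loc; [|exact H]).
    exists 1%nat. intros n Hn.
    assert (P : 1 <= INR n) by (apply (le_INR 1); lia).
    change (rising (INR n + x - 1) (S k)) with (rising (INR n + x - 1) k * (INR n + x - 1 + INR k)).
    pose proof (pos_INR k).
    rewrite ln_mult by (try apply rising_pos; lra). rewrite S_INR.
    replace (x - 1 + INR k + INR n) with (INR n + x - 1 + INR k) by ring. ring.
Qed.

Lemma even_odd_lim (c : nat -> R) (l : R) :
  is_lim_seq (fun N => sum_n c (2 * N + 1)) l -> is_lim_seq c 0 -> is_series c l.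
Proof.
  intros HE Hc. unfold is_series.
  assert (H : is_lim_seq (sum_n c) l).
  { apply is_lim_seq_spec. apply is_lim_seq_spec in HE. apply is_lim_seq_spec in Hc. simpl in HE, Hc |- *.
    intro eps. pose proof (cond_pos eps) as He.
    destruct (HE (mkposreal (eps/2) ltac:(lra))) as [N1 H1].
    destruct (Hc (mkposreal (eps/2) ltac:(lra))) as [N2 H2]. simpl in H1, H2.
    exists (2 * N1 + 2 + N2)%nat. intros n Hn.
    destruct (Nat.Even_or_Odd n) as [[p Hp]|[p Hp]].
    - destruct p as [|p]. lia.
      replace n with (S (2 * p + 1)) by lia.
      rewrite sum_Sn. change plus with Rplus. simpl plus.
      specialize (H1 p ltac:(lia)). replace (p + (p + 0) + 1)%nat with (2 * p + 1)%nat in H1 by lia. specialize (H2 (S (2 * p + 1)) ltac:(lia)).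
      rewrite Rminus_0_r in H2.
      replace (sum_n c (2 * p + 1) + c (S (2 * p + 1)) - l) with
        ((sum_n c (2 * p + 1) - l) + c (S (2 * p + 1))) by ring.
      eapply Rle_lt_trans. apply Rabs_triang. lra.
    - subst n. specialize (H1 p ltac:(lia)). replace (p + (p + 0) + 1)%nat with (2 * p + 1)%nat in H1 by lia. lra. }
  exact H.
Qed.

Theorem mainTheorem10 (k : nat) (x : R) (hk : (1 <= k)%nat) (hx : 0 < x) :
  is_series
    (fun m : nat =>
       let n := S m in
       (-1) ^ n *
       (harmonic n
        - ln (Rpower (rising (INR n + x - 1) k) (/ INR k))
        - euler_gamma))
    (euler_gamma / 2 + / INR k * ln (Gamma ((x + INR k) / 2) / Gamma (x / 2))).
Proof.
  assert (Hk : 0 < INR k) by (apply lt_0_INR; lia).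
  set (A := fun n : nat => / INR k * ln (rising (INR n + x - 1) k)).
  set (a := fun n : nat => harmonic n - A n - euler_gamma).
  set (c := fun m : nat => (-1) ^ (S m) * a (S m)).
  set (xa := x / 2). set (xb := x / 2 + INR k / 2).
  assert (Hxa : 0 < xa) by (unfold xa; lra).
  assert (Hxb : 0 < xb) by (unfold xb; lra).
  assert (Hpair : forall N, a (S (S (2 * N))) - a (S (2 * N)) =
      / 2 * / INR (S N) - / INR k * (ln (xb + INR N) - ln (xa + INR N))).
  { intros N. unfold a, A.
    change (harmonic (S (S (2 * N)))) with (harmonic (S (2 * N)) + / INR (S (S (2 * N)))).
    set (y := INR (S (2 * N)) + x - 1).
    assert (Hy : y = 2 * (xa + INR N)).
    { unfold y, xa. rewrite S_INR, mult_INR. replace (INR 2) with 2 by (simpl; ring). field. }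
    pose proof (pos_INR N).
    assert (Hy0 : 0 < y) by (rewrite Hy; lra).
    replace (INR (S (S (2 * N))) + x - 1) with (y + 1) by (unfold y; rewrite (S_INR (S (2*N))); ring).
    pose proof (ln_rising_shift y k Hy0) as E.
    assert (E2 : ln (y + INR k) - ln y = ln (xb + INR N) - ln (xa + INR N)).
    { replace (y + INR k) with (2 * (xb + INR N)) by (rewrite Hy; unfold xb, xa; field).
      rewrite Hy, !ln_mult by lra. ring. }
    assert (E3 : INR (S (S (2*N))) = 2 * INR (S N)).
    { rewrite !S_INR, mult_INR. replace (INR 2) with 2 by (simpl; ring). ring. }
    rewrite E3, Rinv_mult.
    assert (E4 : ln (rising (y + 1) k) = ln (rising y k) + (ln (xb + INR N) - ln (xa + INR N))) by lra.
    rewrite E4. ring. }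
  assert (HE : forall N, sum_n c (2 * N + 1) =
     harmonic (S N) / 2 - / INR k * (ln (rising xb (S N)) - ln (rising xa (S N)))).
  { induction N as [|N IHN].
    - replace (2 * 0 + 1)%nat with 1%nat by lia.
      rewrite sum_Sn, sum_O. change plus with Rplus. simpl plus.
      pose proof (Hpair 0%nat) as H0. simpl in H0.
      unfold c. replace ((-1) ^ 1) with (-1) by ring. replace ((-1) ^ 2) with 1 by ring.
      change (rising xb 1) with (1 * (xb + INR 0)). change (rising xa 1) with (1 * (xa + INR 0)).
      change (harmonic 1) with (0 + / INR 1). change (INR 0) with 0 in *. change (INR 1) with 1 in *.
      rewrite !Rmult_1_l. rewrite ?Rplus_0_r, ?Rplus_0_l, ?Rinv_1 in H0 |- *. lra.
    - replace (2 * S N + 1)%nat with (S (S (2 * N + 1))) by lia.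
      rewrite sum_Sn, sum_Sn. change plus with Rplus.
      rewrite IHN. unfold c.
      assert (P1 : (-1) ^ (S (S (S (2 * N + 1)))) = 1).
      { replace (S (S (S (2 * N + 1)))) with (2 * S (S N))%nat by lia. apply pow_1_even. }
      assert (P2 : (-1) ^ (S (S (2 * N + 1))) = -1).
      { replace (S (S (2 * N + 1))) with (S (2 * S N))%nat by lia. apply pow_1_odd. }
      rewrite P1, P2.
      pose proof (Hpair (S N)) as H1.
      replace (S (S (2 * S N))) with (S (S (S (2 * N + 1)))) in H1 by lia.
      replace (S (2 * S N)) with (S (S (2 * N + 1))) in H1 by lia.
      change (harmonic (S (S N))) with (harmonic (S N) + / INR (S (S N))).
      change (rising xb (S (S N))) with (rising xb (S N) * (xb + INR (S N))).
      change (rising xa (S (S N))) with (rising xa (S N) * (xa + INR (S N))).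
      pose proof (pos_INR (S N)).
      rewrite !ln_mult by (try apply rising_pos; lra).
      lra. }
  assert (Hlnr : forall z M, 0 < z -> ln (rising z M) = ln (Gamma (z + INR M)) - ln (Gamma z)).
  { intros z M Hz. rewrite gamma_rising by auto.
    rewrite ln_mult by (try apply rising_pos; try apply gamma_pos; auto). ring. }
  assert (HL : is_lim_seq (fun N => sum_n c (2 * N + 1))
      (euler_gamma / 2 + / INR k * (ln (Gamma xb) - ln (Gamma xa)))).
  { pose proof (proj1 (is_lim_seq_incr_1 _ _) euler_lim) as H1.
    pose proof (proj1 (is_lim_seq_incr_1 _ _) (Lk xa Hxa k)) as H2.
    pose proof (is_lim_seq_plus' _ _ _ _ (is_lim_seq_minus' _ _ _ _
       (is_lim_seq_mult' _ _ _ _ (is_lim_seq_const (/2)) H1)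
       (is_lim_seq_mult' _ _ _ _ (is_lim_seq_const (/ INR k)) H2))
       (is_lim_seq_const (/ INR k * (ln (Gamma xb) - ln (Gamma xa))))) as H3.
    replace (euler_gamma / 2 + / INR k * (ln (Gamma xb) - ln (Gamma xa))) with
       (/ 2 * euler_gamma - / INR k * 0 + / INR k * (ln (Gamma xb) - ln (Gamma xa))) by (unfold Rdiv; ring).
    eapply is_lim_seq_ext. 2: exact H3.
    intros N. cbv beta. rewrite HE. rewrite !Hlnr by auto.
    change (xa + INR k / 2) with xb. field. lra. }
  assert (Ha : is_lim_seq a 0).
  { pose proof (is_lim_seq_minus' _ _ _ _ (is_lim_seq_minus' _ _ _ _ euler_lim (is_lim_seq_const euler_gamma))
       (is_lim_seq_mult' _ _ _ _ (is_lim_seq_const (/ INR k)) (ln_rising_lim x k hx))) as H.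
    replace (Finite 0) with (Finite (euler_gamma - euler_gamma - / INR k * 0)) by (f_equal; ring).
    eapply is_lim_seq_ext. 2: exact H.
    intros n. simpl. unfold a, A. field. lra. }
  assert (Hc : is_lim_seq c 0).
  { pose proof (is_lim_seq_abs _ _ (proj1 (is_lim_seq_incr_1 _ _) Ha)) as H. simpl in H.
    rewrite Rabs_R0 in H.
    apply (is_lim_seq_le_le (fun m => - Rabs (a (S m))) _ (fun m => Rabs (a (S m)))).
    - intros m. unfold c.
      replace (Rabs (a (S m))) with (Rabs ((-1) ^ S m * a (S m))) by (rewrite Rabs_mult, pow_1_abs; ring).
      split. pose proof (Rle_abs (- ((-1) ^ S m * a (S m)))). rewrite Rabs_Ropp in H0. lra.
      apply Rle_abs.
    - replace (Finite 0) with (Rbar_opp 0) by (simpl; f_equal; ring).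
      apply -> is_lim_seq_opp. exact H.
    - exact H. }
  pose proof (even_odd_lim c _ HL Hc) as H.
  replace (euler_gamma / 2 + / INR k * ln (Gamma ((x + INR k) / 2) / Gamma xa)) with
     (euler_gamma / 2 + / INR k * (ln (Gamma xb) - ln (Gamma xa))).
  2:{ replace ((x + INR k) / 2) with xb by (unfold xb; field).
      rewrite ln_div by (apply gamma_pos; auto). reflexivity. }
  eapply is_series_ext. 2: exact H.
  intros m. unfold c, a, A. cbv zeta. unfold Rpower at 1. rewrite ln_exp. reflexivity.
Qed.
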